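(* Let $\mathbb F$ be a field, $d\ge1$, $\psi\in\mathbb F^d$, $j\ge 1$ an integer, $\mathcal B\subseteq[d]$ with $|\mathcal B|\le j-1$, $m=j-|\mathcal B|-1$, and $x\in[d]$. Let $\sigma_P\in\mathbb Z^d$ and let $\mathbf P$ be an arbitrary matrix over $\mathbb F$ with rows indexed by $[d]$ and columns indexed by $j$-subsets of $[d]$. Define $\sigma_Q\in\mathbb Z^d$ by $\sigma_Q(i)=1+\sigma_P(i)+\mathrm{ind}_{\mathcal B\cup\{i\}}(i)$. Let $\mathbf Q$ be a $(d;m)$ signed determinant message matrix with signature $\sigma_Q$, let $\mathbf\Delta$ be the injection matrix defined below, and $\bar{\mathbf Q}=\mathbf Q+\mathbf\Delta$. Then for every $m$-subset $\mathcal I\subseteq[d]$, $$\sum_{y=1}^d\psi_y\bar{\mathbf Q}_{y,\mathcal I}=\sum_{i\in\mathcal I}(-1)^{\sigma_Q(i)+\mathrm{ind}_{\mathcal I}(i)}\big[\bar{\mathbf Q}\,\Xi^{(m)}_{\sigma_Q,\psi}\big]_{i,\mathcal I\setminus\{i\}}-\mathbb 1\{\mathcal I\cap\mathcal B=\varnothing\}\,\big[\mathbf P\,\Xi^{(j)}_{\sigma_P,\psi}\big]_{x,\mathcal I\cup\mathcal B}.$$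
   Context: Notation: $[d]=\{1,\dots,d\}$; $\mathrm{ind}_{\mathcal I}(x)=|\{y\in\mathcal I:y\le x\}|$; $\max\varnothing=-\infty$. $(d;m)$ signed determinant message matrix with signature $\sigma$: choose values $v_{x,\mathcal X}\in\mathbb F$ for every $m$-subset $\mathcal X\subseteq[d]$ and $x\in\mathcal X$, and $w_{y,\mathcal Y}\in\mathbb F$ for every $(m+1)$-subset $\mathcal Y\subseteq[d]$ and $y\in\mathcal Y$, satisfying $\sum_{y\in\mathcal Y}(-1)^{\mathrm{ind}_{\mathcal Y}(y)}w_{y,\mathcal Y}=0$ for every such $\mathcal Y$. The matrix has rows $x\in[d]$, columns $m$-subsets $\mathcal I\subseteq[d]$, entries $(-1)^{\sigma(x)}v_{x,\mathcal I}$ if $x\in\mathcal I$ and $(-1)^{\sigma(x)}w_{x,\mathcal I\cup\{x\}}$ if $x\notin\mathcal I$ (for $m=0$ it is the all-zero $d\times1$ matrix with column $\varnothing$). Repair-encoder matrix $\Xi^{(m)}_{\sigma,\psi}$: rows $m$-subsets $\mathcal I$, columns $(m-1)$-subsets $\mathcal J$ of $[d]$, entry $(-1)^{\sigma(y)+\mathrm{ind}_{\mathcal I}(y)}\psi_y$ if $\mathcal J\subseteq\mathcal I$, $\mathcal I\setminus\mathcal J=\{y\}$, and $0$ otherwise (for $m=0$ it has no columns). Injection matrix $\mathbf\Delta$: rows $i\in[d]$, columns $m$-subsets $\mathcal I\subseteq[d]$, with $\mathbf\Delta_{i,\mathcal I}=(-1)^{1+\sigma_P(i)+\mathrm{ind}_{\mathcal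 I\cup\{i\}\cup\mathcal B}(i)}\,\mathbf P_{x,\mathcal I\cup\{i\}\cup\mathcal B}$ if $i>\max\mathcal I$, $i\notin\mathcal B$ and $\mathcal I\cap\mathcal B=\varnothing$, and $\mathbf\Delta_{i,\mathcal I}=0$ otherwise. *)

(* Defs.v *)
(* [d] = {1..d} is modelled by 'I_d (0-based, same order). *)
From HB Require Import structures.
From mathcomp Require Import all_boot all_order all_algebra.
Set Implicit Arguments. Unset Strict Implicit. Unset Printing Implicit Defensive.
Import Order.TTheory GRing.Theory Num.Theory.
Local Open Scope ring_scope.

Definition sgnz (F : fieldType) (z : int) : F := (-1) ^ z.

Definition ind d (I : {set 'I_d}) (x : 'I_d) : nat := #|[set y in I | (y <= x)%N]|.

(* A "matrix" with rows 'I_d and columns subsets of 'I_d (only the columns of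
   the relevant cardinality matter). *)
Definition smat (F : fieldType) d := 'I_d -> {set 'I_d} -> F.

Definition smul (F : fieldType) d (n : nat) (A : 'I_d -> {set 'I_d} -> F)
  (B : {set 'I_d} -> {set 'I_d} -> F) (i : 'I_d) (J : {set 'I_d}) : F :=
  \sum_(K : {set 'I_d} | #|K| == n) A i K * B K J.

Definition Xi (F : fieldType) d (sigma : 'I_d -> int) (psi : 'I_d -> F)
  (I J : {set 'I_d}) : F :=
  match [pick y | (J \subset I) && (I :\: J == [set y])] with
  | Some y => sgnz F (sigma y + (ind I y)%:Z) * psi y
  | None => 0
  end.

Definition is_sdmm (F : fieldType) d (m : nat) (sigma : 'I_d -> int)
  (Q : smat F d) : Prop :=
  exists (v w : 'I_d -> {set 'I_d} -> F),
    (forall Y : {set 'I_d}, #|Y| = m.+1 ->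
       \sum_(y in Y) sgnz F (ind Y y)%:Z * w y Y = 0) /\
    (forall (x : 'I_d) (I : {set 'I_d}), #|I| = m ->
       Q x I = sgnz F (sigma x) * (if x \in I then v x I else w x (x |: I))).

Definition Delta (F : fieldType) d (sigmaP : 'I_d -> int) (P : smat F d)
  (B : {set 'I_d}) (x : 'I_d) (i : 'I_d) (I : {set 'I_d}) : F :=
  if [forall y in I, (y < i)%N] && (i \notin B) && [disjoint I & B]
  then sgnz F (1 + sigmaP i + (ind (I :|: [set i] :|: B) i)%:Z)
       * P x (I :|: [set i] :|: B)
  else 0.

Definition sigmaQ d (sigmaP : 'I_d -> int) (B : {set 'I_d}) (i : 'I_d) : int :=
  1 + sigmaP i + (ind (B :|: [set i]) i)%:Z.

(* Main.v *)
Require Import Defs.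
From HB Require Import structures.
From mathcomp Require Import all_boot all_order all_algebra.
From mathcomp Require Import zify ring.
Import GRing.Theory.
Local Open Scope ring_scope.

Section S.
Variable F : fieldType.

Lemma sgnzD (a b : int) : sgnz F (a + b) = sgnz F a * sgnz F b.
Proof. by rewrite /sgnz expfzDr // oppr_eq0 oner_eq0. Qed.

Lemma sgnz2 (k : int) : sgnz F (2 * k) = 1.
Proof.
by rewrite /sgnz -exprz_exp -[(-1 : F) ^ (2:int)]/((-1) ^+ 2) sqrrN expr1n exp1rz.
Qed.

Lemma sgnz_par (a b : int) : ((a - b) %% 2 = 0)%Z -> sgnz F a = sgnz F b.
Proof.
move=> h; have -> : a = b + 2 * ((a - b) %/ 2)%Z.
  have := divz_eq (a - b) 2; rewrite h addr0 => e. lia.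
by rewrite sgnzD sgnz2 mulr1.
Qed.

Lemma sgnz_sq (a : int) : sgnz F a * sgnz F a = 1.
Proof. by rewrite -sgnzD -(sgnz2 a); apply: sgnz_par; lia. Qed.

Lemma sgnz1 (a : int) : sgnz F (1 + a) = - sgnz F a.
Proof. by rewrite sgnzD /sgnz expr1z mulN1r. Qed.
End S.
Section I.
Variable d : nat.
Implicit Types (A C : {set 'I_d}) (x y : 'I_d).

Lemma ind_U A C x : [disjoint A & C] -> ind (A :|: C) x = (ind A x + ind C x)%N.
Proof.
move=> dis; rewrite /ind.
have -> : [set z in A :|: C | (z <= x)%N] = [set z in A | (z <= x)%N] :|: [set z in C | (z <= x)%N].
  by apply/setP => z; rewrite !inE andb_orl.
rewrite cardsU.
have -> : [set z in A | (z <= x)%N] :&: [set z in C | (z <= x)%N] = set0.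
  apply/setP => z; rewrite !inE; case Az: (z \in A) => //=; case Cz: (z \in C) => //=.
  by move: dis => /disjoint_setI0 /setP /(_ z); rewrite !inE Az Cz.
  by rewrite andbF.
by rewrite cards0 subn0.
Qed.

Lemma ind1 y x : ind [set y] x = (y <= x)%N.
Proof.
rewrite /ind; case: leqP => h.
  have -> : [set z in [set y] | (z <= x)%N] = [set y].
    by apply/setP => z; rewrite !inE; case: eqP => // ->.
  by rewrite cards1.
have -> : [set z in [set y] | (z <= x)%N] = set0.
  by apply/setP => z; rewrite !inE; case: eqP => // ->; rewrite leqNgt h.
by rewrite cards0.
Qed.

Lemma ind_all A x : {in A, forall z : 'I_d, (z <= x)%N} -> ind A x = #|A|.
Proof.
move=> h; rewrite /ind; apply: eq_card => z; rewrite !inE.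
by case Az: (z \in A) => //=; rewrite h.
Qed.

Lemma ind_none A x : {in A, forall z : 'I_d, (x < z)%N} -> ind A x = 0%N.
Proof.
move=> h; rewrite /ind; apply/eqP; rewrite cards_eq0; apply/eqP/setP => z; rewrite !inE.
by case Az: (z \in A) => //=; rewrite leqNgt h.
Qed.
End I.
Section X.
Variables (F : fieldType) (d : nat).
Implicit Types (A C J K : {set 'I_d}) (x y : 'I_d).

Lemma setU1D y J : y \notin J -> (y |: J) :\: J = [set y].
Proof.
move=> yJ; apply/setP => z; rewrite !inE; case: eqP => [->|] //=; first by rewrite yJ.
by case: (z \in J).
Qed.

Lemma Xi_sum (sigma : 'I_d -> int) (psi : 'I_d -> F) K J :
  Xi sigma psi K J = \sum_(y | y \notin J) (K == y |: J)%:R * (sgnz F (sigma y + (ind K y)%:Z) * psi y).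
Proof.
rewrite /Xi; case: pickP => [y0 /andP [sJK /eqP KJ]| none].
  have y0J : y0 \notin J by have := setDE K J; move/setP: KJ => /(_ y0); rewrite !inE eqxx => /andP[].
  have Ke : K = y0 |: J.
    apply/setP => z; rewrite !inE; move/setP: KJ => /(_ z); rewrite !inE.
    case: eqP => [->|_]; first by case/andP=> _ ->.
    case zJ: (z \in J); rewrite /= ?orbT ?orbF; last by move=> ->.
    by rewrite (subsetP sJK).
  rewrite (bigD1 y0) //= Ke eqxx mul1r big1 ?addr0 // => y /andP [yJ ny].
  case: eqP => [e|]; last by rewrite mul0r.
  have : y \in y0 |: J by rewrite e !inE eqxx.
  by rewrite !inE (negbTE ny) (negbTE yJ).
rewrite big1 // => y yJ; case: eqP => [e|]; last by rewrite mul0r.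
have := none y; rewrite e subsetUr /= setU1D // eqxx //.
Qed.

Lemma smul_Xi n (A : 'I_d -> {set 'I_d} -> F) (sigma : 'I_d -> int) (psi : 'I_d -> F) i J :
  #|J|.+1 = n ->
  smul n A (Xi sigma psi) i J =
  \sum_(y | y \notin J) A i (y |: J) * (sgnz F (sigma y + (ind (y |: J) y)%:Z) * psi y).
Proof.
move=> hn; rewrite /smul.
under eq_bigr => K _ do rewrite Xi_sum big_distrr.
rewrite exchange_big /=; apply: eq_bigr => y yJ.
rewrite (bigD1 (y |: J)) /=; last by rewrite cardsU1 yJ add1n hn.
rewrite eqxx mul1r big1 ?addr0 // => K /andP [_ nK].
by rewrite (negbTE nK) mul0r mulr0.
Qed.
End X.

Lemma ind_U1 d (a z : 'I_d) (A : {set 'I_d}) : a \notin A -> ind (a |: A) z = ((a <= z) + ind A z)%N.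
Proof. by move=> aA; rewrite ind_U ?ind1 // disjoints1. Qed.

Lemma disjP d (A C : {set 'I_d}) : reflect (forall z, z \in A -> z \in C -> False) [disjoint A & C].
Proof.
apply: (iffP idP) => [h z zA zC | h]; first by rewrite (disjointFr h zA) in zC.
rewrite disjoints_subset; apply/subsetP => z zA; rewrite inE; apply/negP => zC; exact: h z zA zC.
Qed.

Lemma card_swap d m (I : {set 'I_d}) (i y : 'I_d) : #|I| = m -> i \in I -> y \notin I ->
  #|y |: (I :\ i)| = m.
Proof.
move=> hI iI yI; rewrite cardsU1 !inE (negbTE yI) andbF /=.
by move: hI; rewrite (cardsD1 i) iI.
Qed.

Lemma Qpart (F : fieldType) d (psi : 'I_d -> F) m (sigma : 'I_d -> int) (Q : smat F d) (I : {set 'I_d}) (y : 'I_d) :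
 is_sdmm m sigma Q -> #|I| = m -> y \notin I ->
 psi y * Q y I = \sum_(i in I) sgnz F (sigma i + (ind I i)%:Z) *
   (Q i (y |: (I :\ i)) * (sgnz F (sigma y + (ind (y |: (I :\ i)) y)%:Z) * psi y)).
Proof.
case=> v [w [Hw HQ]] hI yI.
set Y := y |: I.
have cY : #|Y| = m.+1 by rewrite cardsU1 yI hI.
rewrite HQ // (negbTE yI).
have hw := Hw Y cY; rewrite (bigD1 y) /= in hw; last by rewrite !inE eqxx.
have eqI : \sum_(z in Y | z != y) sgnz F (ind Y z)%:Z * w z Y = \sum_(z in I) sgnz F (ind Y z)%:Z * w z Y.
  by apply: eq_bigl => z; rewrite /Y !inE; case: (z =P y) => [->|] /=; rewrite ?(negbTE yI) ?andbT.
rewrite eqI in hw.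
have hs : \sum_(z in I) sgnz F (ind Y z)%:Z * w z Y = - (sgnz F (ind Y y)%:Z * w y Y).
  by rewrite -[LHS](addKr (sgnz F (ind Y y)%:Z * w y Y)) hw addr0.
have step : forall i, i \in I ->
  sgnz F (sigma i + (ind I i)%:Z) *
   (Q i (y |: (I :\ i)) * (sgnz F (sigma y + (ind (y |: (I :\ i)) y)%:Z) * psi y)) =
  (- (sgnz F (sigma y) * sgnz F (ind Y y)%:Z * psi y)) * (sgnz F (ind Y i)%:Z * w i Y).
  move=> i iI.
  have iy : (i : nat) <> y by move=> /val_inj e; rewrite -e iI in yI.
  have iS : i \notin I :\ i by rewrite !inE eqxx.
  have yS : y \notin I :\ i by rewrite !inE (negbTE yI) andbF.
  have ISe : i |: (I :\ i) = I by rewrite setD1K.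
  rewrite HQ; last exact: card_swap.
  have -> : i \in y |: (I :\ i) = false.
    rewrite !inE eqxx /= orbF; apply/eqP => e; apply: iy; by rewrite e.
  have -> : i |: (y |: (I :\ i)) = Y by rewrite setUCA ISe.
  have e1 : ind I i = (1 + ind (I :\ i) i)%N by rewrite -{1}ISe ind_U1 // leqnn.
  have e2 : ind (y |: (I :\ i)) y = (1 + ind (I :\ i) y)%N by rewrite ind_U1 // leqnn.
  have e3 : ind Y i = ((y <= i) + (1 + ind (I :\ i) i))%N by rewrite /Y -{1}ISe !ind_U1 // ?leqnn // ISe.
  have e4 : ind Y y = (1 + ((i <= y) + ind (I :\ i) y))%N by rewrite /Y -{1}ISe !ind_U1 // ?leqnn // ISe.
  have sg : sgnz F (sigma i + (ind I i)%:Z) * sgnz F (sigma i) * sgnz F (sigma y + (ind (y |: (I :\ i)) y)%:Z)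
     = - (sgnz F (sigma y) * sgnz F (ind Y y)%:Z * sgnz F (ind Y i)%:Z).
    rewrite -!sgnzD -sgnz1; apply: sgnz_par; rewrite e1 e2 e3 e4; lia.
  transitivity ((sgnz F (sigma i + (ind I i)%:Z) * sgnz F (sigma i) * sgnz F (sigma y + (ind (y |: (I :\ i)) y)%:Z)) * w i Y * psi y); first ring.
  rewrite sg; ring.
rewrite (eq_bigr _ step) -big_distrr /= hs.
transitivity (sgnz F (sigma y) * psi y * w y Y * (sgnz F (ind Y y)%:Z * sgnz F (ind Y y)%:Z)); first by rewrite sgnz_sq; ring.
ring.
Qed.

Section D.
Lemma Delta0 (F : fieldType) d (sigmaP : 'I_d -> int) (P : smat F d) (B : {set 'I_d}) (x i : 'I_d) (K : {set 'I_d}) :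
  ~~ ((i \notin B) && [disjoint K & B]) -> Delta sigmaP P B x i K = 0.
Proof. by rewrite /Delta -andbA => /negbTE ->; rewrite andbF. Qed.

Lemma Delta_nf (F : fieldType) d (sigmaP : 'I_d -> int) (P : smat F d) (B : {set 'I_d}) (x i : 'I_d) (K : {set 'I_d}) :
  ~~ [forall z in K, (z < i)%N] -> Delta sigmaP P B x i K = 0.
Proof. by rewrite /Delta => /negbTE ->. Qed.

Lemma Delta_val (F : fieldType) d (sigmaP : 'I_d -> int) (P : smat F d) (B : {set 'I_d}) (x i : 'I_d) (K : {set 'I_d}) :
  [forall z in K, (z < i)%N] -> i \notin B -> [disjoint K & B] ->
  Delta sigmaP P B x i K = sgnz F (1 + sigmaP i + (ind (K :|: [set i] :|: B) i)%:Z)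
       * P x (K :|: [set i] :|: B).
Proof. by rewrite /Delta => -> -> ->. Qed.
End D.

Lemma Dpart (F : fieldType) d (psi : 'I_d -> F) (B : {set 'I_d}) m (x : 'I_d)
  (sigmaP : 'I_d -> int) (P : smat F d) (I : {set 'I_d}) (y : 'I_d) :
  #|I| = m -> y \notin I ->
  psi y * Delta sigmaP P B x y I =
  \sum_(i in I) sgnz F (sigmaQ sigmaP B i + (ind I i)%:Z) *
     (Delta sigmaP P B x i (y |: (I :\ i)) *
      (sgnz F (sigmaQ sigmaP B y + (ind (y |: (I :\ i)) y)%:Z) * psi y))
  - (if [disjoint I & B] && (y \notin B)
     then P x (y |: (I :|: B)) * (sgnz F (sigmaP y + (ind (y |: (I :|: B)) y)%:Z) * psi y)
     else 0).
Proof.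
move=> hI yI.
have yneq : forall i, i \in I -> (i : nat) <> y.
  by move=> i iI /val_inj e; rewrite -e iI in yI.
case: (boolP [disjoint I & B]) => dIB /=; last first.
  have dIB' := dIB; rewrite -setI_eq0 in dIB'; case/set0Pn: dIB' => b; rewrite inE => /andP [bI bB].
  rewrite Delta0; last by rewrite (negbTE dIB) andbF.
  rewrite mulr0 subr0 big1 // => i iI.
  rewrite Delta0 ?mul0r ?mulr0 //; apply/andP => [[iB dis]].
  have bi : b != i by apply/eqP => e; rewrite e (negbTE iB) in bB.
  have bK : b \in y |: (I :\ i) by rewrite !inE bi bI orbT.
  by rewrite (disjointFr dis bK) in bB.
case: (boolP (y \in B)) => yB /=.
  rewrite Delta0; last by rewrite yB.
  rewrite mulr0 subr0 big1 // => i iI.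
  rewrite Delta0 ?mul0r ?mulr0 //; apply/andP => [[iB dis]].
  have yK : y \in y |: (I :\ i) by rewrite !inE eqxx.
  by rewrite (disjointFr dis yK) in yB.
have yIB : y \notin I :|: B by rewrite !inE negb_or yI.
have eZ : forall K : {set 'I_d}, (forall z : 'I_d, (z \in K) = (z \in I) || (z == y)) -> K :|: B = y |: (I :|: B).
  move=> K hK; apply/setP => z; rewrite !inE hK; by case: (z == y); rewrite ?orbT ?orbF.
case: (boolP [forall z in I, (z < y)%N]) => hM.
  rewrite Delta_val // (eZ (I :|: [set y])); last by move=> z; rewrite !inE.
  rewrite big1 ?sub0r; last first.
    move=> i iI; rewrite Delta_nf ?mul0r ?mulr0 //; apply/negP => /forall_inP h.
    have := h y; rewrite !inE eqxx => /(_ isT) hyi.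
    have := forall_inP hM i iI => hiy; lia.
  rewrite -addrA sgnz1; ring.
move/forallPn: hM => [z0]; rewrite negb_imply => /andP [z0I hz0].
case: (arg_maxnP (fun i : 'I_d => nat_of_ord i) z0I) => i0 i0I imax.
have {}i0I : i0 \in I := i0I.
have hyi0 : (y < i0)%N.
  have := imax z0 z0I; have := yneq i0 i0I; move: hz0; rewrite -leqNgt => hz0; lia.
rewrite Delta_nf; last by apply/negP => /forall_inP h; have := h i0 i0I; lia.
rewrite mulr0 (bigD1 i0) //= big1 ?addr0; last first.
  move=> i /andP [iI ii0]; rewrite Delta_nf ?mul0r ?mulr0 //; apply/negP => /forall_inP h.
  have i0i : i0 != i by rewrite eq_sym.
  have : i0 \in y |: (I :\ i) by rewrite !inE i0i i0I orbT.
  move/h; have := imax i iI; lia.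
have i0B : i0 \notin B by rewrite (disjointFr dIB i0I).
rewrite Delta_val; first last.
- apply/disjP => z; rewrite !inE => /orP [/eqP -> | /andP [_ zI]] zB.
    by rewrite zB in yB.
  by rewrite (disjointFr dIB zI) in zB.
- exact: i0B.
- apply/forall_inP => z; rewrite !inE => /orP [/eqP -> // | /andP [zi0 zI]].
  have : (z : nat) <> i0 by move=> /val_inj /eqP; rewrite (negbTE zi0).
  have := imax z zI; lia.
rewrite (eZ (y |: (I :\ i0) :|: [set i0])); last first.
  move=> z; rewrite !inE; case: (z =P i0) => [->|_] /=; first by rewrite i0I !orbT.
  by rewrite orbF orbC.
set S := I :\ i0.
have yS : y \notin S by rewrite !inE (negbTE yI) andbF.
have e1 : ind I i0 = m by rewrite ind_all ?hI // => z zI; exact: imax z zI.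
have e2 : ind (y |: (I :|: B)) i0 = (1 + (m + ind B i0))%N by rewrite ind_U1 // ind_U // e1 (ltnW hyi0).
have e3 : ind (B :|: [set i0]) i0 = (1 + ind B i0)%N by rewrite setUC ind_U1 // leqnn.
have i0y : (i0 <= y)%N = false by rewrite leqNgt hyi0.
have i0S : i0 \notin S by rewrite !inE eqxx.
have e4 : ind (y |: (I :|: B)) y = (1 + (ind S y + ind B y))%N.
  by rewrite ind_U1 // leqnn ind_U // -{1}(setD1K i0I) ind_U1 // i0y.
have e5 : ind (y |: S) y = (1 + ind S y)%N by rewrite ind_U1 // leqnn.
have e6 : ind (B :|: [set y]) y = (1 + ind B y)%N by rewrite setUC ind_U1 // leqnn.
have sg : sgnz F (sigmaQ sigmaP B i0 + (ind I i0)%:Z) *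
    sgnz F (1 + sigmaP i0 + (ind (y |: (I :|: B)) i0)%:Z) *
    sgnz F (sigmaQ sigmaP B y + (ind (y |: S) y)%:Z) =
    sgnz F (sigmaP y + (ind (y |: (I :|: B)) y)%:Z).
  rewrite /sigmaQ -!sgnzD; apply: sgnz_par; rewrite e1 e2 e3 e5 e6 e4; lia.
apply/eqP; rewrite eq_sym subr_eq0; apply/eqP.
transitivity (sgnz F (sigmaQ sigmaP B i0 + (ind I i0)%:Z) *
    sgnz F (1 + sigmaP i0 + (ind (y |: (I :|: B)) i0)%:Z) *
    sgnz F (sigmaQ sigmaP B y + (ind (y |: S) y)%:Z) * P x (y |: (I :|: B)) * psi y); first ring.
rewrite sg; ring.
Qed.

Theorem proposition4 (F : fieldType) (d : nat) (psi : 'I_d -> F) (j : nat)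
  (B : {set 'I_d}) (m : nat) (x : 'I_d) (sigmaP : 'I_d -> int) (P : smat F d)
  (Q : smat F d) :
  (0 < d)%N -> (1 <= j)%N -> (#|B| <= j - 1)%N -> m = (j - #|B| - 1)%N ->
  is_sdmm m (sigmaQ sigmaP B) Q ->
  let Qbar := fun (y : 'I_d) (I : {set 'I_d}) => Q y I + Delta sigmaP P B x y I in
  forall I : {set 'I_d}, #|I| = m ->
    \sum_(y < d) psi y * Qbar y I =
      \sum_(i in I) sgnz F (sigmaQ sigmaP B i + (ind I i)%:Z)
                     * smul m Qbar (Xi (sigmaQ sigmaP B) psi) i (I :\ i)
    - (if [disjoint I & B]
       then smul j P (Xi sigmaP psi) x (I :|: B) else 0).
Proof.
move=> hd hj hB hm hQ Qbar I hI.
pose T (i y : 'I_d) := sgnz F (sigmaQ sigmaP B i + (ind I i)%:Z) *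
   (Qbar i (y |: (I :\ i)) * (sgnz F (sigmaQ sigmaP B y + (ind (y |: (I :\ i)) y)%:Z) * psi y)).
pose E (y : 'I_d) := if [disjoint I & B] && (y \notin B)
     then P x (y |: (I :|: B)) * (sgnz F (sigmaP y + (ind (y |: (I :|: B)) y)%:Z) * psi y)
     else 0.
have eR : \sum_(i in I) sgnz F (sigmaQ sigmaP B i + (ind I i)%:Z)
                     * smul m Qbar (Xi (sigmaQ sigmaP B) psi) i (I :\ i) =
   \sum_(i in I) psi i * Qbar i I + \sum_(y | y \notin I) \sum_(i in I) T i y.
  rewrite (exchange_big _ _ _ (fun y => y \notin I)) -big_split /=; apply: eq_bigr => i iI.
  rewrite smul_Xi; last by move: hI; rewrite (cardsD1 i) iI.
  rewrite big_distrr /= (bigD1 i) /=; last by rewrite !inE eqxx.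
  rewrite setD1K //; congr (_ + _).
    transitivity (psi i * Qbar i I * (sgnz F (sigmaQ sigmaP B i + (ind I i)%:Z) * sgnz F (sigmaQ sigmaP B i + (ind I i)%:Z))); first by ring.
    by rewrite sgnz_sq mulr1.
  apply: eq_bigl => y; rewrite !inE; case: (y =P i) => [->|] /=; first by rewrite iI.
  by rewrite andbT.
rewrite eR (bigID (fun y => y \in I)) /= -addrA; congr (_ + _).
have py : forall y, y \notin I -> psi y * Qbar y I = \sum_(i in I) T i y - E y.
  move=> y yI; rewrite /Qbar mulrDr (@Qpart _ _ psi _ _ _ _ _ hQ hI yI) (@Dpart _ _ psi B _ x sigmaP P _ _ hI yI) addrA -big_split /=.
  by congr (_ - _); apply: eq_bigr => i _; rewrite /T /Qbar; ring.
rewrite (eq_bigr _ py) sumrB; congr (_ - _).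
rewrite /E; case: (boolP [disjoint I & B]) => dIB /=; last by rewrite big1.
rewrite smul_Xi; last first.
  rewrite cardsU (disjoint_setI0 dIB) cards0 hI; lia.
by rewrite -big_mkcondr; apply: eq_bigl => y; rewrite !inE negb_or.
Qed.
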